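(* Let $n=2k$ with $k\in\mathbb N$, and let $a\in\mathbb R$, $a\neq0$. Then $|T_n(i/a)|\ge \frac12\left(\frac1a+1\right)^n$, where $T_n$ is the Tchebyshev polynomial of the first kind of degree $n$.
   Context: $T_n(x)=\frac12\left((x+\sqrt{x^2-1})^n+(x-\sqrt{x^2-1})^n\right)$, the Tchebyshev polynomial of the first kind of degree $n$. *)

(* Defs.v *)
From HB Require Import structures.
From mathcomp Require Import all_boot all_order all_algebra.
From mathcomp Require Import complex.
Set Implicit Arguments. Unset Strict Implicit. Unset Printing Implicit Defensive.
Import Order.TTheory GRing.Theory Num.Theory.
Local Open Scope ring_scope.

(* Chebyshev polynomial of the first kind, via the paper's closed formula
   T_n(x) = ((x + sqrt(x^2-1))^n + (x - sqrt(x^2-1))^n) / 2, on complex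
   arguments (the choice of square root branch is irrelevant). *)
Definition chebT (R : rcfType) (n : nat) (x : R[i]) : R[i] :=
  ((x + sqrtc (x ^+ 2 - 1)) ^+ n + (x - sqrtc (x ^+ 2 - 1)) ^+ n) / 2%:R.

(* Main.v *)
Require Import Defs.
From HB Require Import structures.
From mathcomp Require Import all_boot all_order all_algebra.
From mathcomp Require Import complex.
From mathcomp Require Import lra ring.
Import Order.TTheory GRing.Theory Num.Theory.
Local Open Scope ring_scope.

Lemma xE (R : rcfType) (a : R) (ha : a != 0) : ('i%C / (a%:C)%C) = Complex 0 a^-1.
Proof.
have haC : (a%:C)%C != 0 :> R[i] by rewrite eq_complex /= negb_and ha.
apply: (mulIf haC). rewrite divfK //.
apply/eqP; rewrite eq_complex /=. apply/andP; split; apply/eqP.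
  by rewrite !mul0r mulr0 subr0.
by rewrite mul0r add0r mulVf.
Qed.

Lemma powi (R : rcfType) (A : R) k :
  (Complex 0 A) ^+ (2 * k) = (((- A ^+ 2) ^+ k)%:C)%C.
Proof.
rewrite exprM rmorphXn /=. congr (_ ^+ k).
rewrite expr2 /=; apply/eqP; rewrite eq_complex /=; apply/andP; split; apply/eqP; ring.
Qed.

Lemma normC (R : rcfType) (r : R) : `|(r%:C)%C| = (`|r|%:C)%C.
Proof. by rewrite normc_def /= expr0n /= addr0 sqrtr_sqr. Qed.

Lemma key (R : rcfType) (c m : R) : m * m = c * c + 1 ->
  (c + 1) ^+ 2 <= (c + m) ^+ 2 \/ (c + 1) ^+ 2 <= (c - m) ^+ 2.
Proof.
move=> hm.
have m1 : 1 <= m \/ m <= -1.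
  case: (lerP 1 m) => h; first by left.
  right; case: (lerP m (-1)) => // h'; exfalso; nra.
rewrite !expr2.
case: (lerP 0 c) => hc; case: m1 => hm1.
- by left; nra.
- by right; nra.
- by right; nra.
- by left; nra.
Qed.

Theorem lemma1 (R : rcfType) (k : nat) (a : R) (ha : a != 0) :
  (((a^-1 + 1) ^+ (2 * k) / 2%:R)%:C)%C <= `|chebT (2 * k) ('i%C / (a%:C)%C)|.
Proof.
rewrite /chebT (@xE _ _ ha).
set c := a^-1.
set s := sqrtc _.
have hs : s ^+ 2 = (Complex 0 c) ^+ 2 - 1 := sqr_sqrtc _.
case: s hs => r m hs.
move: hs; rewrite !expr2 /= => /eqP; rewrite eq_complex /= => /andP[/eqP h1 /eqP h2].
have hr : r = 0.
  have e : r * r * (r * r + c * c + 1) = 0 by nra.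
  move/eqP: e; rewrite mulf_eq0 => /orP[/eqP|/eqP e]; first by move/eqP; rewrite mulf_eq0 orbb => /eqP.
  exfalso; nra.
subst r.
have hm : m * m = c * c + 1 by lra.
have -> : ((c*i)%C + (0 +i* m)%C) = Complex 0 (c + m) by apply/eqP; rewrite eq_complex /= !addr0 !eqxx.
have -> : ((c*i)%C - (0 +i* m)%C) = Complex 0 (c - m) by apply/eqP; rewrite eq_complex /= !subr0 !eqxx.
rewrite !powi.
set X := (- (c + m) ^+ 2) ^+ k. set Y := (- (c - m) ^+ 2) ^+ k.
have -> : ((X%:C)%C + (Y%:C)%C)/2 = (((X+Y)/2)%:C)%C.
  by rewrite rmorphM rmorphD /= fmorphV rmorph_nat.
rewrite normC lecR.
have e : forall t : R, (- t) ^+ k = (-1) ^+ k * t ^+ k.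
  by move=> t; rewrite -[- t]mulN1r exprMn.
rewrite /X /Y (e ((c+m)^+2)) (e ((c-m)^+2)) -mulrDr -mulrA normrM normrX normrN1 expr1n mul1r.
have hP : 0 <= ((c + m) ^+ 2) ^+ k by rewrite exprn_ge0 // sqr_ge0.
have hQ : 0 <= ((c - m) ^+ 2) ^+ k by rewrite exprn_ge0 // sqr_ge0.
rewrite ger0_norm; last by rewrite divr_ge0 // addr_ge0.
rewrite ler_pM2r; last by rewrite invr_gt0 ltr0n.
rewrite exprM.
have [hA|hB] := @key _ _ _ hm.
- apply: le_trans (lerXn2r k _ _ hA) _; rewrite ?inE ?nnegrE ?sqr_ge0 //; try lra.
- apply: le_trans (lerXn2r k _ _ hB) _; rewrite ?inE ?nnegrE ?sqr_ge0 //; try lra.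
Qed.
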